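(* For every integer $t\ge2$, $$-\frac{71}{100t}<\frac{S_3(t)}{\binom{-3/2}{t}}+\frac{(-1)^t}{\binom{-3/2}{t}}\alpha\sinh\alpha+1-\cosh\alpha<\frac{12}{25t}.$$
   Context: $\alpha=\pi/6$. $(a)_m=a(a+1)\cdots(a+m-1)$ is the rising factorial ($(a)_0=1$); $\binom{x}{m}=x(x-1)\cdots(x-m+1)/m!$ for $m\ge1$, $\binom{x}{0}=1$. For $t\ge2$, $$S_3(t)=\sum_{s=1}^t\frac{(1/2-s)_{s+1}\binom{-3/2}{t-s}}{s}\sum_{u=1}^s\frac{(-1)^u(-s)_u}{(s+u)!\,(2u-1)!}\left(\frac{\pi^2}{36}\right)^u.$$ *)

(* Defs.v *)
From Stdlib Require Import Reals Arith.
Open Scope R_scope.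

Fixpoint rising (a : R) (m : nat) : R :=
  match m with
  | O => 1
  | S m' => rising a m' * (a + INR m')
  end.

Fixpoint falling (x : R) (m : nat) : R :=
  match m with
  | O => 1
  | S m' => falling x m' * (x - INR m')
  end.

Definition gbinom (x : R) (m : nat) : R := falling x m / INR (fact m).

Fixpoint sum1 (f : nat -> R) (n : nat) : R :=
  match n with
  | O => 0
  | S n' => sum1 f n' + f n
  end.

Definition alpha : R := PI / 6.

Definition S3 (t : nat) : R :=
  sum1 (fun s =>
    rising (1/2 - INR s) (s + 1) * gbinom (-3/2) (t - s) / INR s *
    sum1 (fun u =>
      (-1) ^ u * rising (- INR s) u
        / (INR (fact (s + u)) * INR (fact (2 * u - 1)))
        * (PI ^ 2 / 36) ^ u) s) t.

(* Main.v *)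
Require Import Defs.
From Stdlib Require Import Reals Lra Lia Psatz Arith.
Open Scope R_scope.

Fixpoint sm (f : nat -> R) (n : nat) : R :=
  match n with O => 0 | S k => sm f k + f k end.

Lemma sm_ext f g n : (forall i, (i < n)%nat -> f i = g i) -> sm f n = sm g n.
Proof. induction n; intros H; simpl; auto. rewrite IHn by (intros; apply H; lia). rewrite H by lia. auto. Qed.

Lemma sm_plus f g n : sm (fun i => f i + g i) n = sm f n + sm g n.
Proof. induction n; simpl; [lra|]. rewrite IHn; lra. Qed.

Lemma sm_scal c f n : sm (fun i => c * f i) n = c * sm f n.
Proof. induction n; simpl; [lra|]. rewrite IHn; lra. Qed.

Lemma sm_minus f g n : sm (fun i => f i - g i) n = sm f n - sm g n.
Proof. induction n; simpl; [lra|]. rewrite IHn; lra. Qed.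

Lemma sm_zero f n : (forall i, (i < n)%nat -> f i = 0) -> sm f n = 0.
Proof. intros H. rewrite (sm_ext f (fun _ => 0)) by auto. induction n; simpl; [lra|]. rewrite IHn; [lra|]. intros; apply H; lia. Qed.

Lemma sm_shift f n : sm f (S n) = f 0%nat + sm (fun i => f (S i)) n.
Proof. induction n; simpl in *; [lra|]. rewrite IHn. lra. Qed.

Lemma sm_rev f n : sm f n = sm (fun i => f (n - 1 - i)%nat) n.
Proof.
  induction n; [reflexivity|].
  rewrite (sm_shift (fun i => f (S n - 1 - i)%nat)). cbn [sm]. rewrite IHn.
  replace (S n - 1 - 0)%nat with n by lia.
  rewrite (sm_ext (fun i => f (S n - 1 - S i)%nat) (fun i => f (n - 1 - i)%nat)).
  - lra.
  - intros; f_equal; lia.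
Qed.

Lemma sm_swap (g : nat -> nat -> R) n m :
  sm (fun i => sm (fun j => g i j) m) n = sm (fun j => sm (fun i => g i j) n) m.
Proof.
  induction n; simpl.
  - symmetry; apply sm_zero; auto.
  - rewrite IHn. rewrite <- sm_plus. reflexivity.
Qed.

Lemma sm_abs f n : Rabs (sm f n) <= sm (fun i => Rabs (f i)) n.
Proof. induction n; simpl. rewrite Rabs_R0; lra. eapply Rle_trans; [apply Rabs_triang|]. lra. Qed.

Lemma sm_le f g n : (forall i, (i < n)%nat -> f i <= g i) -> sm f n <= sm g n.
Proof. induction n; intros H; simpl; [lra|]. assert (f n <= g n) by (apply H; lia). assert (sm f n <= sm g n) by (apply IHn; intros; apply H; lia). lra. Qed.

Lemma sm_extend f n m : (n <= m)%nat -> (forall i, (n <= i < m)%nat -> f i = 0) -> sm f n = sm f m.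
Proof.
  intros Hnm H. induction m.
  - replace n with 0%nat by lia. reflexivity.
  - destruct (Nat.eq_dec n (S m)) as [->|Hn]; [reflexivity|].
    simpl. rewrite <- IHm by (lia || (intros; apply H; lia)). rewrite H by lia. lra.
Qed.

Lemma sum1_sm f n : sum1 f n = sm (fun i => f (S i)) n.
Proof. induction n; simpl; auto. rewrite IHn; reflexivity. Qed.

(* central binomial / 4^n *)
Fixpoint cb (n : nat) : R :=
  match n with O => 1 | S k => cb k * (2 * INR k + 1) / (2 * INR k + 2) end.
Definition CB (n : nat) : R := (2 * INR n + 1) * cb n.

Lemma cb_S n : cb (S n) = cb n * (2 * INR n + 1) / (2 * INR n + 2).
Proof. reflexivity. Qed.

Lemma cb_pos n : 0 < cb n.
Proof. induction n; simpl. lra. pose proof (pos_INR n). apply Rdiv_lt_0_compat; nra. Qed.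

Lemma cb_le n : cb (S n) <= cb n.
Proof. rewrite cb_S. pose proof (pos_INR n). pose proof (cb_pos n).
  apply Rmult_le_reg_r with (2 * INR n + 2); [lra|]. field_simplify; nra. Qed.

Lemma CB_S n : CB (S n) = CB n + cb (S n).
Proof. unfold CB. rewrite cb_S, S_INR. pose proof (pos_INR n). field. lra. Qed.

Lemma CB_ge1 n : 1 <= CB n.
Proof. induction n. unfold CB; simpl; lra. rewrite CB_S. pose proof (cb_pos (S n)). lra. Qed.

Definition ww n := sm (fun k => cb k * cb (n - k)) (S n).

Lemma sym_lem n : 2 * sm (fun k => INR k * cb k * cb (n - k)) (S n) = INR n * ww n.
Proof.
  assert (E: INR n * ww n = sm (fun k => INR n * (cb k * cb (n-k))) (S n)) by (unfold ww; rewrite sm_scal; reflexivity).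
  rewrite E.
  rewrite (sm_ext (fun i => INR n * (cb i * cb (n - i)))
    (fun k => INR k * cb k * cb (n - k) + INR (n - k) * cb k * cb (n - k))).
  2:{ intros i Hi. rewrite minus_INR by lia. ring. }
  rewrite sm_plus.
  rewrite (sm_rev (fun k => INR (n - k) * cb k * cb (n - k))).
  rewrite (sm_ext (fun i => INR (n - (S n - 1 - i)) * cb (S n - 1 - i) * cb (n - (S n - 1 - i)))
    (fun k => INR k * cb k * cb (n - k))).
  2:{ intros i Hi. replace (n - (S n - 1 - i))%nat with i by lia. replace (S n - 1 - i)%nat with (n - i)%nat by lia. ring. }
  lra.
Qed.

Lemma ww_1 n : ww n = 1.
Proof.
  induction n. unfold ww; simpl; lra.
  assert (H : INR (S n) * ww (S n) = INR (S n) * ww n).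
  { rewrite <- sym_lem.
    rewrite sm_shift. simpl (INR 0 * _). 
    rewrite (sm_ext (fun i => INR (S i) * cb (S i) * cb (S n - S i))
      (fun j => INR j * cb j * cb (n - j) + / 2 * (cb j * cb (n - j)))).
    2:{ intros i Hi. replace (S n - S i)%nat with (n - i)%nat by lia. rewrite cb_S, S_INR.
        pose proof (pos_INR i). field. lra. }
    rewrite sm_plus, sm_scal. pose proof (sym_lem n) as Hs. unfold ww in *. rewrite S_INR. lra. }
  rewrite IHn in *. apply Rmult_eq_reg_l with (INR (S n)). lra. rewrite S_INR; pose proof (pos_INR n); lra.
Qed.

Fixpoint hp (s u : nat) : R :=
  match u with O => 1 | S k => hp s k * (INR s - INR k) / (INR s + 1 + INR k) end.

Lemma hp_zero s u : (s < u)%nat -> hp s u = 0.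
Proof.
  induction u; intros H; [lia|]. simpl.
  destruct (Nat.eq_dec s u) as [->|Hne].
  - replace (INR u - INR u) with 0 by ring. lra.
  - rewrite IHu by lia. lra.
Qed.

Lemma hp_succ j k : hp (S j) (S k) = hp j k * (INR j + 1)^2 / ((INR j + INR k + 1) * (INR j + INR k + 2)).
Proof.
  pose proof (pos_INR j). pose proof (pos_INR k).
  induction k.
  - cbn [hp]. rewrite ?S_INR. change (INR 0) with 0. field. lra.
  - cbn [hp] in *. pose proof (pos_INR k). rewrite IHk by lra. rewrite ?S_INR. field. repeat split; lra.
Qed.

Definition cc (s u : nat) : R :=
  match s with O => 0 | _ => / 2 * cb s * hp s u / INR s end.

Definition dl (s k : nat) : R := match s, k with O, O => 1 | _, _ => 0 end.

Lemma cc_rec j k :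
  8 * (INR k + 1) * cc (S j) (S k) - 4 * (INR k + 1) * cc j (S k)
  = 2 * (INR k + 2) * cc j (S (S k)) + 2 * INR k * cc j k + dl j k.
Proof.
  destruct j as [|m].
  - unfold cc, dl. destruct k as [|k].
    + simpl. field.
    + rewrite hp_zero by lia. simpl. lra.
  - pose proof (pos_INR m). pose proof (pos_INR k).
    unfold cc, dl. cbv iota beta.
    rewrite hp_succ, cb_S. cbn [hp]. rewrite !S_INR.
    field. repeat split; lra.
Qed.

Definition LL (u t : nat) : R := sm (fun s => cc s u * CB (t - s)) (S t).

Lemma LL_shift u t : LL u (S t) = sm (fun s => cc (S s) u * CB (t - s)) (S t).
Proof. unfold LL. rewrite sm_shift. unfold cc at 1. simpl minus. lra. Qed.

Lemma LL_rec k t :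
  2 * (INR k + 2) * LL (S (S k)) t + 2 * INR k * LL k t + dl 0 k * CB t
  = 8 * (INR k + 1) * LL (S k) (S t) - 4 * (INR k + 1) * LL (S k) t.
Proof.
  rewrite LL_shift. unfold LL.
  assert (E : 8 * (INR k + 1) * sm (fun s => cc (S s) (S k) * CB (t - s)) (S t) -
     4 * (INR k + 1) * sm (fun s => cc s (S k) * CB (t - s)) (S t)
     = sm (fun s => 2 * (INR k + 2) * (cc s (S (S k)) * CB (t - s))
     + 2 * INR k * (cc s k * CB (t - s)) + dl s k * CB (t - s)) (S t)).
  { rewrite <- !sm_scal, <- sm_minus. apply sm_ext. intros i Hi. pose proof (cc_rec i k) as H.
    transitivity ((8 * (INR k + 1) * cc (S i) (S k) - 4 * (INR k + 1) * cc i (S k)) * CB (t - i)); [ring|].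
    rewrite H. ring. }
  rewrite E.
  rewrite !sm_plus, !sm_scal.
  rewrite (sm_shift (fun s => dl s k * CB (t - s))).
  rewrite (sm_zero (fun i => dl (S i) k * CB (t - S i))) by (intros; unfold dl; lra).
  replace (t - 0)%nat with t by lia. lra.
Qed.

Definition Lam (u t : nat) : R :=
  match u with O => 0 | S _ => 2 * INR u * (LL u t + 1) - CB t end.

Lemma Lam_rec k t :
  Lam (S (S k)) t = 4 * Lam (S k) (S t) - 2 * Lam (S k) t - Lam k t + 4 * cb (S t).
Proof.
  pose proof (LL_rec k t) as H.
  pose proof (CB_S t) as HC.
  unfold Lam. rewrite !S_INR.
  destruct k as [|k].
  - unfold dl in H. change (INR 0) with 0 in *. lra.
  - unfold dl in H. rewrite S_INR in *. lra.
Qed.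

Lemma M_lem n : sm (fun s => cc s 1 * cb (n - s)) (S n) = cb (S n) - cb n / 2.
Proof.
  rewrite (sm_ext _ (fun s => cb s * cb (n - s) - cb (S s) * cb (n - s) - (dl s 0 / 2) * cb (n - s))).
  2:{ intros i Hi. destruct i as [|i].
      - unfold cc, dl. simpl cb. lra.
      - unfold cc, dl. cbv iota beta. cbn [hp]. rewrite !cb_S. rewrite !S_INR. change (INR 0) with 0.
        pose proof (pos_INR i). field. lra. }
  rewrite !sm_minus. fold (ww n).
  pose proof (ww_1 n) as H1. pose proof (ww_1 (S n)) as H2. unfold ww in H2.
  rewrite sm_shift in H2.
  rewrite (sm_ext (fun i => cb (S i) * cb (S n - S i)) (fun s => cb (S s) * cb (n - s))) in H2
    by (intros; f_equal; f_equal; lia).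
  rewrite (sm_shift (fun s => dl s 0 / 2 * cb (n - s))). rewrite (sm_zero (fun i => dl (S i) 0 / 2 * cb (n - S i))) by (intros; unfold dl; lra).
  replace (S n - 0)%nat with (S n) in H2 by lia. replace (n - 0)%nat with n by lia.
  simpl cb in H2 at 1. unfold dl. lra.
Qed.

Lemma Lam1 t : Lam 1 t = 2 * cb (S t).
Proof.
  induction t.
  - unfold Lam, LL, CB. simpl. unfold cc. simpl. field.
  - assert (E : LL 1 (S t) = LL 1 t + sm (fun s => cc s 1 * cb (S t - s)) (S (S t))).
    { unfold LL. cbn [sm]. 
      rewrite (sm_ext (fun s => cc s 1 * CB (S t - s)) (fun s => cc s 1 * CB (t - s) + cc s 1 * cb (S t - s)))
        by (intros i Hi; replace (S t - i)%nat with (S (t - i)) by lia; rewrite CB_S; ring).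
      rewrite sm_plus. replace (S t - S t)%nat with 0%nat by lia. replace (S t - t)%nat with 1%nat by lia.
      replace (t - t)%nat with 0%nat by lia.
      assert (CB 1 = CB 0 + cb 1) by apply CB_S. assert (CB 0 = 1) by (unfold CB; simpl; lra).
      rewrite H, H0. change (cb 0) with 1. ring. }
    rewrite M_lem in E.
    unfold Lam in *. rewrite E. rewrite CB_S. change (INR 1) with 1 in *. lra.
Qed.

Lemma abs_bd x a : Rabs x <= a -> -a <= x <= a.
Proof. unfold Rabs; destruct Rcase_abs; lra. Qed.

Lemma Lam_bound u : (forall t, Rabs (Lam u t) <= (7 ^ u - 1) / 3 * cb t) /\
                    (forall t, Rabs (Lam (S u) t) <= (7 ^ (S u) - 1) / 3 * cb t).
Proof.
  induction u.
  - split; intros t.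
    + simpl. rewrite Rabs_R0. pose proof (cb_pos t). lra.
    + rewrite Lam1. pose proof (cb_pos (S t)). pose proof (cb_le t). rewrite Rabs_right by lra. simpl pow. lra.
  - destruct IHu as [H0 H1]. split; [exact H1|]. intros t.
    rewrite Lam_rec.
    pose proof (H1 (S t)). pose proof (H1 t). pose proof (H0 t).
    pose proof (cb_pos t). pose proof (cb_pos (S t)). pose proof (cb_le t).
    assert (P : 1 <= 7 ^ u) by (apply pow_R1_Rle; lra).
    assert (Hb : 7 ^ S u * cb (S t) <= 7 ^ S u * cb t) by (apply Rmult_le_compat_l; [apply pow_le; lra| lra]).
    apply Rabs_le.
    destruct (abs_bd _ _ H) as [A1 A2].
    destruct (abs_bd _ _ H2) as [B1 B2].
    destruct (abs_bd _ _ H3) as [C1 C2].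
    simpl pow in *. nra.
Qed.

Lemma INR_fact_S n : INR (fact (S n)) = (INR n + 1) * INR (fact n).
Proof. rewrite fact_simpl, mult_INR, S_INR. reflexivity. Qed.

Lemma falling_32 m : falling (-3/2) m = (-1)^m * CB m * INR (fact m).
Proof.
  induction m.
  - unfold CB. simpl. lra.
  - cbn [falling]. rewrite IHm. unfold CB. rewrite cb_S, INR_fact_S, S_INR. simpl pow.
    pose proof (pos_INR m). field. lra.
Qed.

Lemma gbinom_32 m : gbinom (-3/2) m = (-1)^m * CB m.
Proof. unfold gbinom. rewrite falling_32. field. apply INR_fact_neq_0. Qed.

Lemma rising_shift a m : rising a (S m) = a * rising (a + 1) m.
Proof.
  induction m.
  - simpl. ring.
  - cbn [rising] in *. rewrite IHm. rewrite S_INR. ring.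
Qed.

Lemma rising_half s : rising (1/2 - INR s) (s + 1) = / 2 * (-1)^s * INR (fact s) * cb s.
Proof.
  rewrite Nat.add_1_r. induction s.
  - simpl. lra.
  - rewrite rising_shift. replace (1 / 2 - INR (S s) + 1) with (1/2 - INR s) by (rewrite S_INR; ring).
    rewrite IHs. rewrite INR_fact_S, cb_S, S_INR. simpl pow. pose proof (pos_INR s). field. lra.
Qed.

Lemma rising_neg s u : (-1)^u * rising (- INR s) u * INR (fact s) = hp s u * INR (fact (s + u)).
Proof.
  induction u.
  - simpl. rewrite Nat.add_0_r. ring.
  - cbn [rising hp]. replace (s + S u)%nat with (S (s + u)) by lia. rewrite INR_fact_S, plus_INR.
    simpl pow.
    transitivity (-1 * ((-1) ^ u * rising (- INR s) u * INR (fact s)) * (- INR s + INR u)); [ring|].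
    rewrite IHu. pose proof (pos_INR s). pose proof (pos_INR u). field. lra.
Qed.

Definition xx := PI ^ 2 / 36.
Definition aa (u : nat) : R := xx ^ u / INR (fact (2 * u - 1)).

Lemma S3_term t s : (1 <= s <= t)%nat ->
  rising (1/2 - INR s) (s + 1) * gbinom (-3/2) (t - s) / INR s *
    sum1 (fun u => (-1) ^ u * rising (- INR s) u
        / (INR (fact (s + u)) * INR (fact (2 * u - 1)))
        * (PI ^ 2 / 36) ^ u) s
  = (-1)^t * (sm (fun k => aa (S k) * cc s (S k)) t * CB (t - s)).
Proof.
  intros [H1 H2].
  rewrite sum1_sm.
  rewrite (sm_ext _ (fun k => aa (S k) * hp s (S k) / INR (fact s))).
  2:{ intros i Hi. unfold aa, xx. pose proof (rising_neg s (S i)) as R.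
      pose proof (INR_fact_neq_0 s). pose proof (INR_fact_neq_0 (s + S i)). pose proof (INR_fact_neq_0 (2 * S i - 1)).
      replace ((-1) ^ S i * rising (- INR s) (S i)) with (hp s (S i) * INR (fact (s + S i)) / INR (fact s)).
      2:{ rewrite <- R. field. auto. }
      field. repeat split; auto. }
  rewrite (sm_extend _ s t) by (lia || (intros i Hi; rewrite hp_zero by lia; lra)).
  rewrite rising_half, gbinom_32.
  rewrite (sm_ext (fun k => aa (S k) * cc s (S k)) (fun k => aa (S k) * hp s (S k) / INR (fact s) * (/ 2 * cb s * INR (fact s) / INR s))).
  2:{ intros i Hi. unfold cc. destruct s; [lia|]. pose proof (INR_fact_neq_0 (S s)). field.
      split; auto. apply not_0_INR; lia. }
  rewrite (sm_ext (fun k => aa (S k) * hp s (S k) / INR (fact s) * (/ 2 * cb s * INR (fact s) / INR s))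
    (fun k => (/ 2 * cb s * INR (fact s) / INR s) * (aa (S k) * hp s (S k) / INR (fact s)))) by (intros; ring).
  rewrite sm_scal.
  replace ((-1)^t) with ((-1)^s * (-1)^(t-s)) by (rewrite <- pow_add; f_equal; lia).
  assert (INR s <> 0) by (apply not_0_INR; lia).
  field. auto.
Qed.

Lemma S3_conv t : (1 <= t)%nat ->
  S3 t / gbinom (-3/2) t = sm (fun k => aa (S k) * LL (S k) t) t / CB t.
Proof.
  intros Ht. unfold S3. rewrite sum1_sm.
  rewrite (sm_ext _ (fun i => (-1)^t * (sm (fun k => aa (S k) * cc (S i) (S k)) t * CB (t - S i)))).
  2:{ intros i Hi. apply S3_term. lia. }
  rewrite sm_scal. rewrite gbinom_32.
  assert (Hm : (-1)^t <> 0) by (apply pow_nonzero; lra).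
  assert (HC : CB t <> 0) by (pose proof (CB_ge1 t); lra).
  rewrite (sm_ext (fun i => sm (fun k => aa (S k) * cc (S i) (S k)) t * CB (t - S i))
     (fun i => sm (fun k => aa (S k) * cc (S i) (S k) * CB (t - S i)) t)).
  2:{ intros i Hi. transitivity (CB (t - S i) * sm (fun k => aa (S k) * cc (S i) (S k)) t); [ring|].
      rewrite <- sm_scal. apply sm_ext; intros; ring. }
  rewrite sm_swap.
  rewrite (sm_ext (fun j => sm (fun i => aa (S j) * cc (S i) (S j) * CB (t - S i)) t)
     (fun k => aa (S k) * LL (S k) t)).
  2:{ intros j Hj. unfold LL. rewrite sm_shift. replace (cc 0 (S j)) with 0 by reflexivity.
      rewrite Rmult_0_l, Rplus_0_l, <- sm_scal. apply sm_ext. intros; ring. }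
  field. split; auto.
Qed.

Definition ef (y : R) (i : nat) : R := / INR (fact i) * y ^ i.
Definition tau (y : R) (k : nat) : R := Rabs y ^ k / INR (fact k).

Lemma tau_S y k : tau y (S k) = tau y k * Rabs y / (INR k + 1).
Proof. unfold tau. rewrite INR_fact_S. simpl pow. pose proof (INR_fact_neq_0 k). pose proof (pos_INR k). field. lra. Qed.

Lemma tau_nonneg y k : 0 <= tau y k.
Proof. unfold tau. unfold Rdiv. apply Rmult_le_pos. apply pow_le, Rabs_pos. left; apply Rinv_0_lt_compat, INR_fact_lt_0. Qed.

Lemma ef_abs y k : Rabs (ef y k) = tau y k.
Proof. unfold ef, tau. rewrite Rabs_mult, Rabs_inv, RPow_abs. rewrite Rabs_right. field. apply INR_fact_neq_0.
  left; apply INR_fact_lt_0. Qed.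

Lemma tail_bd y N : Rabs y <= 1 -> forall k,
  Rabs (sum_f_R0 (ef y) (N + k) - sum_f_R0 (ef y) N) + 2 * tau y (S (N + k)) <= 2 * tau y (S N).
Proof.
  intros Hy k. induction k.
  - rewrite Nat.add_0_r. replace (sum_f_R0 (ef y) N - sum_f_R0 (ef y) N) with 0 by ring. rewrite Rabs_R0. lra.
  - replace (N + S k)%nat with (S (N + k)) by lia. cbn [sum_f_R0].
    replace (sum_f_R0 (ef y) (N + k) + ef y (S (N + k)) - sum_f_R0 (ef y) N)
      with ((sum_f_R0 (ef y) (N + k) - sum_f_R0 (ef y) N) + ef y (S (N + k))) by ring.
    pose proof (Rabs_triang (sum_f_R0 (ef y) (N + k) - sum_f_R0 (ef y) N) (ef y (S (N + k)))).
    rewrite ef_abs in H.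
    rewrite (tau_S y (S (N + k))).
    pose proof (tau_nonneg y (S (N + k))). pose proof (pos_INR (S (N+k))). pose proof (Rabs_pos y).
    rewrite S_INR in *.
    assert (tau y (S (N + k)) * Rabs y / (INR (N + k) + 1 + 1) <= tau y (S (N + k)) / 2).
    { apply Rmult_le_reg_r with (INR (N + k) + 1 + 1); [lra|]. field_simplify; [|lra].
      apply Rmult_le_reg_r with 2; [lra|]. field_simplify. pose proof (pos_INR (N + k)). nra. }
    lra.
Qed.

Lemma exp_approx y N : Rabs y <= 1 -> Rabs (exp y - sum_f_R0 (ef y) N) <= 2 * tau y (S N).
Proof.
  intros Hy.
  assert (Hin : infinite_sum (ef y) (exp y)).
  { unfold exp. destruct (exist_exp y) as [l Hl]. simpl. exact Hl. }
  destruct (Rle_or_lt (Rabs (exp y - sum_f_R0 (ef y) N)) (2 * tau y (S N))) as [H|H]; auto.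
  exfalso.
  destruct (Hin (Rabs (exp y - sum_f_R0 (ef y) N) - 2 * tau y (S N))) as [M HM]; [lra|].
  specialize (HM (N + M)%nat ltac:(lia)).
  pose proof (tail_bd y N Hy M). pose proof (tau_nonneg y (S (N + M))).
  unfold R_dist in HM.
  pose proof (Rabs_triang (exp y - sum_f_R0 (ef y) (N + M)) (sum_f_R0 (ef y) (N + M) - sum_f_R0 (ef y) N)).
  replace (exp y - sum_f_R0 (ef y) (N + M) + (sum_f_R0 (ef y) (N + M) - sum_f_R0 (ef y) N))
    with (exp y - sum_f_R0 (ef y) N) in H2 by ring.
  rewrite Rabs_minus_sym in HM. lra.
Qed.

Lemma neg_pow_even y n : (- y) ^ (2 * n) = y ^ (2 * n).
Proof. rewrite !pow_mult. f_equal. ring. Qed.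

Lemma neg_pow_odd y n : (- y) ^ (2 * n + 1) = - y ^ (2 * n + 1).
Proof. rewrite !pow_add, neg_pow_even. ring. Qed.

Lemma even_odd y t :
  sum_f_R0 (ef y) (2 * t + 1) + sum_f_R0 (ef (- y)) (2 * t + 1) = 2 * sm (fun u => y ^ (2 * u) / INR (fact (2 * u))) (S t) /\
  sum_f_R0 (ef y) (2 * t + 1) - sum_f_R0 (ef (- y)) (2 * t + 1) = 2 * sm (fun u => y ^ (2 * u + 1) / INR (fact (2 * u + 1))) (S t).
Proof.
  induction t.
  - simpl. unfold ef. simpl. split; field.
  - destruct IHt as [H1 H2].
    replace (2 * S t + 1)%nat with (S (S (2 * t + 1))) by lia. cbn [sum_f_R0].
    change (sm ?f (S (S t))) with (sm f (S t) + f (S t)).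
    cbv beta.
    replace (S (S (2 * t + 1))) with (2 * S t + 1)%nat by lia.
    replace (S (2 * t + 1)) with (2 * S t)%nat by lia.
    unfold ef at 2 3 5 6 8 9 11 12. rewrite !neg_pow_even, !neg_pow_odd.
    split; lra.
Qed.

Lemma alpha_bd : 0 < alpha <= 2/3.
Proof. unfold alpha. pose proof PI_RGT_0. pose proof PI_4. lra. Qed.

Lemma xx_alpha : xx = alpha ^ 2.
Proof. unfold xx, alpha. field. Qed.

Lemma xx_bd : 0 < xx <= 4/9.
Proof. rewrite xx_alpha. pose proof alpha_bd. split; nra. Qed.

Lemma aa_S k : aa (S k) = alpha ^ (2 * S k) / INR (fact (2 * k + 1)).
Proof. unfold aa. rewrite xx_alpha, pow_mult. f_equal. f_equal. f_equal. lia. Qed.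

Lemma sm_even t : sm (fun u => alpha ^ (2 * u) / INR (fact (2 * u))) (S t)
  = 1 + sm (fun k => aa (S k) / (2 * INR (S k))) t.
Proof.
  rewrite sm_shift. simpl (alpha ^ (2 * 0)). change (INR (fact (2*0))) with 1.
  f_equal; [field|]. apply sm_ext. intros i Hi. rewrite aa_S.
  replace (2 * S i)%nat with (S (2 * i + 1)) by lia. rewrite INR_fact_S.
  rewrite !S_INR, plus_INR, mult_INR. simpl (INR 2). pose proof (INR_fact_neq_0 (2*i+1)). pose proof (pos_INR i).
  change (INR 1) with 1. field. lra.
Qed.

Lemma sm_odd t : alpha * sm (fun u => alpha ^ (2 * u + 1) / INR (fact (2 * u + 1))) (S t)
  = sm (fun k => aa (S k)) t + alpha ^ (2 * t + 2) / INR (fact (2 * t + 1)).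
Proof.
  cbn [sm]. rewrite Rmult_plus_distr_l, <- sm_scal. f_equal.
  - apply sm_ext. intros i Hi. rewrite aa_S. replace (2 * S i)%nat with (S (2 * i + 1)) by lia.
    simpl pow. field. apply INR_fact_neq_0.
  - replace (2 * t + 2)%nat with (S (2 * t + 1)) by lia. simpl pow. field. apply INR_fact_neq_0.
Qed.

Lemma cosh_approx t : Rabs (cosh alpha - sm (fun u => alpha ^ (2 * u) / INR (fact (2 * u))) (S t))
   <= 2 * tau alpha (2 * t + 2).
Proof.
  pose proof alpha_bd as Ha. destruct (even_odd alpha t) as [H1 _].
  assert (R1 : Rabs alpha <= 1) by (rewrite Rabs_right; lra).
  assert (R2 : Rabs (- alpha) <= 1) by (rewrite Rabs_Ropp, Rabs_right; lra).
  pose proof (exp_approx alpha (2 * t + 1) R1). pose proof (exp_approx (- alpha) (2 * t + 1) R2).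
  assert (Et : tau (- alpha) (S (2 * t + 1)) = tau alpha (S (2 * t + 1))) by (unfold tau; rewrite Rabs_Ropp; reflexivity).
  replace (S (2 * t + 1)) with (2 * t + 2)%nat in * by lia.
  unfold cosh.
  replace ((exp alpha + exp (- alpha)) / 2 - sm (fun u => alpha ^ (2 * u) / INR (fact (2 * u))) (S t))
    with (((exp alpha - sum_f_R0 (ef alpha) (2 * t + 1)) + (exp (- alpha) - sum_f_R0 (ef (- alpha)) (2 * t + 1))) / 2) by lra.
  unfold Rdiv. rewrite Rabs_mult, (Rabs_right (/ 2)) by lra.
  pose proof (Rabs_triang (exp alpha - sum_f_R0 (ef alpha) (2 * t + 1)) (exp (- alpha) - sum_f_R0 (ef (- alpha)) (2 * t + 1))).
  lra.
Qed.

Lemma sinh_approx t : Rabs (sinh alpha - sm (fun u => alpha ^ (2 * u + 1) / INR (fact (2 * u + 1))) (S t))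
   <= 2 * tau alpha (2 * t + 2).
Proof.
  pose proof alpha_bd as Ha. destruct (even_odd alpha t) as [_ H1].
  assert (R1 : Rabs alpha <= 1) by (rewrite Rabs_right; lra).
  assert (R2 : Rabs (- alpha) <= 1) by (rewrite Rabs_Ropp, Rabs_right; lra).
  pose proof (exp_approx alpha (2 * t + 1) R1). pose proof (exp_approx (- alpha) (2 * t + 1) R2).
  assert (Et : tau (- alpha) (S (2 * t + 1)) = tau alpha (S (2 * t + 1))) by (unfold tau; rewrite Rabs_Ropp; reflexivity).
  replace (S (2 * t + 1)) with (2 * t + 2)%nat in * by lia.
  unfold sinh.
  replace ((exp alpha - exp (- alpha)) / 2 - sm (fun u => alpha ^ (2 * u + 1) / INR (fact (2 * u + 1))) (S t))
    with (((exp alpha - sum_f_R0 (ef alpha) (2 * t + 1)) + - (exp (- alpha) - sum_f_R0 (ef (- alpha)) (2 * t + 1))) / 2) by lra.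
  unfold Rdiv. rewrite Rabs_mult, (Rabs_right (/ 2)) by lra.
  pose proof (Rabs_triang (exp alpha - sum_f_R0 (ef alpha) (2 * t + 1)) (- (exp (- alpha) - sum_f_R0 (ef (- alpha)) (2 * t + 1)))).
  rewrite Rabs_Ropp in H2.
  lra.
Qed.

Definition gg (k : nat) : R := aa (S k) * 7 ^ (S k) / INR (S k).

Lemma aa_pos k : 0 < aa k.
Proof. unfold aa. pose proof xx_bd. apply Rdiv_lt_0_compat. apply pow_lt; lra. apply INR_fact_lt_0. Qed.

Lemma gg_nonneg k : 0 <= gg k.
Proof. unfold gg. pose proof (aa_pos (S k)). pose proof (pos_INR k). rewrite S_INR.
  apply Rmult_le_pos; [|left; apply Rinv_0_lt_compat; lra]. apply Rmult_le_pos; [lra|]. apply pow_le; lra. Qed.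

Lemma aa_SS k : aa (S (S k)) = aa (S k) * xx / ((2 * INR k + 2) * (2 * INR k + 3)).
Proof.
  unfold aa. replace (2 * S (S k) - 1)%nat with (S (S (2 * k + 1))) by lia.
  replace (2 * S k - 1)%nat with (2 * k + 1)%nat by lia.
  rewrite !INR_fact_S. rewrite !S_INR, plus_INR, mult_INR. change (INR 2) with 2. change (INR 1) with 1.
  simpl pow. pose proof (INR_fact_lt_0 (2 * k + 1)). pose proof (pos_INR k). field. repeat split; lra.
Qed.

Lemma gg_ratio k : gg (S k) <= gg k / 3.
Proof.
  assert (E : gg (S k) = gg k * (xx * 7 * (INR k + 1) / ((2 * INR k + 2) * (2 * INR k + 3) * (INR k + 2)))).
  { unfold gg. rewrite aa_SS. rewrite !S_INR. simpl pow. pose proof (pos_INR k). field. repeat split; lra. }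
  rewrite E. pose proof (gg_nonneg k). pose proof xx_bd. pose proof (pos_INR k).
  assert (xx * 7 * (INR k + 1) / ((2 * INR k + 2) * (2 * INR k + 3) * (INR k + 2)) <= 1/3).
  { apply Rmult_le_reg_r with ((2 * INR k + 2) * (2 * INR k + 3) * (INR k + 2)).
    { apply Rmult_lt_0_compat; [|lra]. nra. }
    field_simplify; try lra. nra. }
  nra.
Qed.

Lemma gg_sum n : sm gg n + 3/2 * gg n <= 3/2 * gg 0.
Proof.
  induction n; simpl sm; [lra|].
  pose proof (gg_ratio n). lra.
Qed.



Lemma fact_bd t : (2 <= t)%nat -> (60 * t <= fact (2 * t + 1))%nat.
Proof.
  intros H. induction t; [lia|].
  destruct (Nat.eq_dec t 1) as [->|Hn]; [simpl; lia|].
  replace (2 * S t + 1)%nat with (S (S (2 * t + 1))) by lia.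
  rewrite !fact_simpl. specialize (IHt ltac:(lia)). nia.
Qed.

Lemma pow_le1 a n : 0 <= a <= 1 -> a ^ n <= 1.
Proof. intros H. induction n; simpl; [lra|]. pose proof (pow_le a n). nra. Qed.

Lemma Q_decomp t : (1 <= t)%nat ->
  S3 t / gbinom (-3/2) t + (-1) ^ t / gbinom (-3/2) t * alpha * sinh alpha + 1 - cosh alpha
  = sm (fun k => aa (S k) * Lam (S k) t / (2 * INR (S k) * CB t)) t
    + (alpha ^ (2 * t + 2) / INR (fact (2 * t + 1))
       + alpha * (sinh alpha - sm (fun u => alpha ^ (2 * u + 1) / INR (fact (2 * u + 1))) (S t))) / CB t
    - (cosh alpha - sm (fun u => alpha ^ (2 * u) / INR (fact (2 * u))) (S t)).
Proof.
  intros Ht. rewrite S3_conv by auto. rewrite gbinom_32.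
  assert (Hm : (-1)^t <> 0) by (apply pow_nonzero; lra).
  assert (HC : CB t <> 0) by (pose proof (CB_ge1 t); lra).
  rewrite sm_even.
  pose proof (sm_odd t) as HO.
  assert (E : sm (fun k => aa (S k) * Lam (S k) t / (2 * INR (S k) * CB t)) t
     = / CB t * sm (fun k => aa (S k) * LL (S k) t) t + / CB t * sm (fun k => aa (S k)) t
       - sm (fun k => aa (S k) / (2 * INR (S k))) t).
  { rewrite <- !sm_scal, <- sm_plus, <- sm_minus. apply sm_ext. intros i Hi.
    unfold Lam. pose proof (pos_INR i). rewrite S_INR. field. split; auto. lra. }
  rewrite E.
  set (Sodd := sm (fun u => alpha ^ (2 * u + 1) / INR (fact (2 * u + 1))) (S t)) in *.
  replace (alpha ^ (2 * t + 2) / INR (fact (2 * t + 1))) with (alpha * Sodd - sm (fun k => aa (S k)) t) by lra.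
  field. split; auto.
Qed.

Theorem mainTheorem12 (t : nat) (ht : (2 <= t)%nat) :
  - 71 / (100 * INR t) <
    S3 t / gbinom (-3/2) t + (-1) ^ t / gbinom (-3/2) t * alpha * sinh alpha
      + 1 - cosh alpha
  < 12 / (25 * INR t).
Proof.
  rewrite Q_decomp by lia.
  set (Ssum := sm (fun k => aa (S k) * Lam (S k) t / (2 * INR (S k) * CB t)) t).
  set (e1 := sinh alpha - sm (fun u => alpha ^ (2 * u + 1) / INR (fact (2 * u + 1))) (S t)).
  set (e2 := cosh alpha - sm (fun u => alpha ^ (2 * u) / INR (fact (2 * u))) (S t)).
  set (A := alpha ^ (2 * t + 2)).
  set (F := INR (fact (2 * t + 1))).
  set (T := INR t).
  assert (HT : 2 <= T) by (unfold T; replace 2 with (INR 2) by (simpl; lra); apply le_INR; lia).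
  pose proof alpha_bd as Ha.
  pose proof (CB_ge1 t) as HCB.
  assert (HF : 60 * T <= F) by (unfold F, T; replace 60 with (INR 60) by (simpl; lra); rewrite <- mult_INR; apply le_INR; apply fact_bd; lia).
  assert (HA : 0 <= A <= 4/9).
  { unfold A. split. apply pow_le; lra.
    replace (2 * t + 2)%nat with (2 + 2 * t)%nat by lia. rewrite pow_add.
    replace (alpha ^ 2) with (alpha * alpha) by ring.
    pose proof (pow_le1 alpha (2 * t) ltac:(lra)). pose proof (pow_le alpha (2 * t) ltac:(lra)).
    assert (alpha * alpha <= 4/9) by nra. set (P := alpha ^ (2 * t)) in *. assert (0 <= alpha * alpha) by nra.
    assert (alpha * alpha * P <= alpha * alpha) by (rewrite <- (Rmult_1_r (alpha*alpha)) at 2; apply Rmult_le_compat_l; lra). lra. }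
  assert (Htau : tau alpha (2 * t + 2) <= A / F).
  { unfold tau, A, F. rewrite Rabs_right by lra.
    replace (2 * t + 2)%nat with (S (2 * t + 1)) by lia. rewrite INR_fact_S.
    pose proof (INR_fact_lt_0 (2 * t + 1)). pose proof (pos_INR (2 * t + 1)).
    pose proof (pow_le alpha (S (2 * t + 1)) ltac:(lra)).
    unfold Rdiv. apply Rmult_le_compat_l; [lra|]. apply Rinv_le_contravar; [lra|]. nra. }
  pose proof (sinh_approx t) as He1. fold e1 in He1.
  pose proof (cosh_approx t) as He2. fold e2 in He2.
  assert (HS : Rabs Ssum <= sm gg t / (6 * (2 * T + 1))).
  { unfold Ssum. eapply Rle_trans; [apply sm_abs|].
    replace (sm gg t / (6 * (2 * T + 1))) with (sm (fun k => gg k / (6 * (2 * T + 1))) t).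
    2:{ rewrite (sm_ext (fun k => gg k / (6 * (2 * T + 1))) (fun k => / (6 * (2 * T + 1)) * gg k)) by (intros; unfold Rdiv; ring).
        rewrite sm_scal. unfold Rdiv; ring. }
    apply sm_le. intros k Hk.
    destruct (Lam_bound (S k)) as [HL _]. specialize (HL t).
    pose proof (aa_pos (S k)). pose proof (pos_INR k). pose proof (cb_pos t).
    assert (Hcb : CB t = (2 * T + 1) * cb t) by reflexivity.
    unfold Rdiv at 1.
    rewrite Rabs_mult, Rabs_mult, Rabs_inv, (Rabs_right (aa (S k))) by lra.
    rewrite (Rabs_right (2 * INR (S k) * CB t)) by (rewrite S_INR; nra).
    unfold gg. rewrite Hcb. rewrite S_INR in *.
    assert (0 < 7 ^ S k) by (apply pow_lt; lra).
    apply Rle_trans with (aa (S k) * ((7 ^ S k - 1) / 3 * cb t) * / (2 * (INR k + 1) * ((2 * T + 1) * cb t))).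
    { apply Rmult_le_compat_r. left; apply Rinv_0_lt_compat; nra. apply Rmult_le_compat_l; lra. }
    apply Rmult_le_reg_r with (6 * (INR k + 1) * (2 * T + 1) * cb t).
    { apply Rmult_lt_0_compat; [|lra]. nra. }
    field_simplify; try (split; lra); try lra.
    nra. }
  assert (Hg : sm gg t <= 3/2 * gg 0).
  { pose proof (gg_sum t). pose proof (gg_nonneg t). lra. }
  assert (Hg0 : gg 0 = 7 * xx).
  { unfold gg, aa. simpl. field. }
  pose proof xx_bd as Hxx.
  assert (HS2 : T * Rabs Ssum <= 7/18).
  { apply Rle_trans with (T * (sm gg t / (6 * (2 * T + 1)))).
    apply Rmult_le_compat_l; lra.
    apply Rmult_le_reg_r with (6 * (2 * T + 1)); [lra|]. field_simplify; try lra.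
    rewrite Hg0 in Hg. nra. }
  assert (Herr : T * (Rabs ((A / F + alpha * e1) / CB t) + Rabs e2) <= 5 * (4/9) / 60).
  { assert (HAF : T * (A / F) <= (4/9) / 60).
    { unfold Rdiv. apply Rmult_le_reg_r with F; [lra|].
      replace (T * (A * / F) * F) with (T * A) by (field; lra). nra. }
    assert (Hr : Rabs ((A / F + alpha * e1) / CB t) <= A / F + alpha * Rabs e1).
    { replace ((A / F + alpha * e1) / CB t) with ((A / F + alpha * e1) * / CB t) by reflexivity. rewrite Rabs_mult, Rabs_inv, (Rabs_right (CB t)) by lra.
      pose proof (Rabs_triang (A / F) (alpha * e1)). rewrite Rabs_mult, (Rabs_right alpha) in H by lra.
      rewrite (Rabs_right (A / F)) in H.
      2:{ apply Rle_ge. unfold Rdiv. apply Rmult_le_pos; [lra|]. left; apply Rinv_0_lt_compat; lra. }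
      assert (0 <= Rabs (A / F + alpha * e1)) by apply Rabs_pos.
      apply Rle_trans with (Rabs (A / F + alpha * e1) * 1).
      apply Rmult_le_compat_l; [lra|]. rewrite <- Rinv_1. apply Rinv_le_contravar; lra. lra. }
    assert (0 <= A / F). { unfold Rdiv. apply Rmult_le_pos; [lra|]. left; apply Rinv_0_lt_compat; lra. }
    pose proof (Rabs_pos e1). pose proof (Rabs_pos e2).
    assert (alpha * Rabs e1 <= 2 * (A / F)) by nra.
    assert (T * (alpha * Rabs e1) <= T * (2 * (A / F))) by (apply Rmult_le_compat_l; lra).
    assert (Rabs e2 <= 2 * (A / F)) by lra.
    assert (T * Rabs e2 <= T * (2 * (A / F))) by (apply Rmult_le_compat_l; lra).
    assert (T * (Rabs ((A / F + alpha * e1) / CB t) + Rabs e2) <= T * (A / F + alpha * Rabs e1 + Rabs e2)) by (apply Rmult_le_compat_l; lra).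
    nra. }
  set (Q := Ssum + (A / F + alpha * e1) / CB t - e2).
  assert (HQ : - (43/100) <= Q * T <= 43/100).
  { pose proof (Rabs_triang Ssum ((A / F + alpha * e1) / CB t)).
    pose proof (Rabs_triang (Ssum + (A / F + alpha * e1) / CB t) (- e2)). rewrite Rabs_Ropp in H0.
    replace (Ssum + (A / F + alpha * e1) / CB t + - e2) with Q in H0 by (unfold Q; ring).
    assert (Rabs Q <= Rabs Ssum + Rabs ((A / F + alpha * e1) / CB t) + Rabs e2) by lra.
    assert (T * Rabs Q <= T * (Rabs Ssum + (Rabs ((A / F + alpha * e1) / CB t) + Rabs e2))) by (apply Rmult_le_compat_l; lra).
    assert (T * Rabs Q <= 43/100) by lra.
    apply abs_bd. rewrite Rabs_mult, (Rabs_right T) by lra. lra. }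
  split.
  - apply Rmult_lt_reg_r with T; [lra|]. replace (- 71 / (100 * T) * T) with (- 71 / 100) by (field; lra). lra.
  - apply Rmult_lt_reg_r with T; [lra|]. replace (12 / (25 * T) * T) with (12 / 25) by (field; lra). lra.
Qed.
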